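(* Let $n,d,T$ be positive integers and let $\Phi_T:\mathbb{R}^{d\times n}\to\mathbb{R}^m$ be a 1-WL geometric model (as defined in the context) in which all the functions $\phi_t,\psi_t$ ($t=0,\dots,T-1$) and $\mathrm{ReadOut}$ are upper Lipschitz. Then $\Phi_T$ is Lipschitz with respect to $d_{\mathcal{D}}$: there exists $L>0$ such that $\|\Phi_T({X})-\Phi_T({Y})\|_2\leq L\, d_{\mathcal{D}}({X},{Y})$ for all ${X},{Y}\in\mathbb{R}^{d\times n}$.
   Context: A point set is ${X}\in\mathbb{R}^{d\times n}$ with columns $x_1,\dots,x_n\in\mathbb{R}^d$. A 1-WL geometric model with $T$ iterations is defined as follows: set $c_i^0=0$ for all $i\in[n]$, and for $t=0,\dots,T-1$, $$c_i^{t+1}=\phi_t\Big(c_i^t,\ \psi_t\big(\{\!\{(c_i^t,c_j^t,\|x_i-x_j\|_2)\mid j\in[n]\}\!\}\big)\Big),$$ and finally $\Phi_T({X})=\mathrm{ReadOut}(\{\!\{c_1^T,\dots,c_n^T\}\!\})$. Here $\phi_t$ are functions between Euclidean spaces, and $\psi_t$ and $\mathrm{ReadOut}$ are multiset functions, i.e. functions of a matrix whose columns are the multiset elements that are invariant to permuting these columns; Lipschitzness of a multiset function means Lipschitzness of this matrix function in the standard Euclidean sense. The Hard-Gromov-Wasserstein distance is $$d_{\mathcal{D}}({X},{Y})=\min_{\pi\in S_n}\sum_{i,j=1}^n\big|\,\|x_i-x_j\|_2-\|y_{\pi(i)}-y_{\pi(j)}\|_2\,\big|.$$ *)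

(* Defs.v *)
From HB Require Import structures.
From mathcomp Require Import all_boot all_order all_algebra all_fingroup.
From mathcomp Require Import reals.
Set Implicit Arguments. Unset Strict Implicit. Unset Printing Implicit Defensive.
Import Order.TTheory GRing.Theory Num.Theory.
Local Open Scope ring_scope.

Definition mnorm (R : realType) (p q : nat) (A : 'M[R]_(p, q)) : R :=
  Num.sqrt (\sum_(i < p) \sum_(j < q) A i j ^+ 2).

Definition lipschitz (R : realType) (p1 q1 p2 q2 : nat)
  (f : 'M[R]_(p1, q1) -> 'M[R]_(p2, q2)) : Prop :=
  exists L : R, forall x y, mnorm (f x - f y) <= L * mnorm (x - y).

(* multiset function: a function of a matrix whose columns are the multiset
   elements, invariant under permutation of the columns *)
Definition multiset_fun (R : realType) (k n p : nat)
  (f : 'M[R]_(k, n) -> 'cV[R]_p) : Prop :=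
  forall (s : 'S_n) (M : 'M[R]_(k, n)), f (col_perm s M) = f M.

Definition pdist (R : realType) (d n : nat) (X : 'M[R]_(d, n)) (i j : 'I_n) : R :=
  mnorm (col i X - col j X).

Definition hgw_cost (R : realType) (d n : nat) (X Y : 'M[R]_(d, n)) (s : 'S_n) : R :=
  \sum_(i < n) \sum_(j < n) `|pdist X i j - pdist Y (s i) (s j)|.

(* Hard-Gromov-Wasserstein distance: minimum over all permutations
   (the default value of the min is the cost of the identity, which is itself
   one of the minimized terms, so this is exactly the minimum) *)
Definition hgw (R : realType) (d n : nat) (X Y : 'M[R]_(d, n)) : R :=
  \big[Num.min/hgw_cost X Y 1%g]_(s : 'S_n) hgw_cost X Y s.

Section WL.
Variables (R : realType) (d n : nat) (a b : nat -> nat).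
(* a t = dimension of colours c_i^t, b t = output dimension of psi_t *)
Variable phi : forall t, 'cV[R]_(a t + b t) -> 'cV[R]_(a t.+1).
(* phi_t(c, h) is phi t applied to the concatenation (c; h) *)
Variable psi : forall t, 'M[R]_(a t + a t + 1, n) -> 'cV[R]_(b t).
(* psi_t applied to the matrix whose j-th column is (c_i^t; c_j^t; ||x_i-x_j||) *)
Variable X : 'M[R]_(d, n).

Definition wl_agg t (C : 'M[R]_(a t, n)) (i : 'I_n) : 'M[R]_(a t + a t + 1, n) :=
  \matrix_(k, j) (col_mx (col_mx (col i C) (col j C)) (pdist X i j)%:M) k 0.

Definition wl_step t (C : 'M[R]_(a t, n)) : 'M[R]_(a t.+1, n) :=
  \matrix_(k, i) (phi (col_mx (col i C) (psi (wl_agg C i)))) k 0.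

(* column i of wl_colors t is c_i^t; c_i^0 = 0 *)
Fixpoint wl_colors (t : nat) : 'M[R]_(a t, n) :=
  match t as t0 return 'M[R]_(a t0, n) with
  | 0 => 0
  | t'.+1 => wl_step (wl_colors t')
  end.
End WL.

Definition wl_model (R : realType) (d n T m : nat) (a b : nat -> nat)
  (phi : forall t, 'cV[R]_(a t + b t) -> 'cV[R]_(a t.+1))
  (psi : forall t, 'M[R]_(a t + a t + 1, n) -> 'cV[R]_(b t))
  (readout : 'M[R]_(a T, n) -> 'cV[R]_m) (X : 'M[R]_(d, n)) : 'cV[R]_m :=
  readout (wl_colors phi psi X T).

(* Main.v *)
Require Import Defs.
From HB Require Import structures.
From mathcomp Require Import all_boot all_order all_algebra all_fingroup.
From mathcomp Require Import reals.
From mathcomp Require Import ring lra.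
Import Order.TTheory GRing.Theory Num.Theory.
Set Implicit Arguments. Unset Strict Implicit. Unset Printing Implicit Defensive.
Local Open Scope ring_scope.

Section Aux.
Variable R : realType.

Definition N1 p q (A : 'M[R]_(p, q)) : R := \sum_(i < p) \sum_(j < q) `|A i j|.

Lemma N1_ge0 p q (A : 'M[R]_(p, q)) : 0 <= N1 A.
Proof. by apply: sumr_ge0 => i _; apply: sumr_ge0. Qed.

Lemma mnorm_ge0 p q (A : 'M[R]_(p, q)) : 0 <= mnorm A.
Proof. exact: sqrtr_ge0. Qed.

Lemma sq_sum_le (I : Type) (r : seq I) (F : I -> R) :
  (forall i, 0 <= F i) -> \sum_(i <- r) F i ^+ 2 <= (\sum_(i <- r) F i) ^+ 2.
Proof.
move=> F0; elim: r => [|x r IH]; first by rewrite !big_nil expr2 mulr0.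
rewrite !big_cons.
have S0 : 0 <= \sum_(i <- r) F i by apply: sumr_ge0.
have := F0 x; nra.
Qed.

Lemma le_sum1 (I : finType) (F : I -> R) j :
  (forall i, 0 <= F i) -> F j <= \sum_i F i.
Proof.
move=> F0; rewrite (bigD1 j) //= lerDl; apply: sumr_ge0 => i _; exact: F0.
Qed.

Lemma mnorm_le_N1 p q (A : 'M[R]_(p, q)) : mnorm A <= N1 A.
Proof.
rewrite /mnorm.
have h : \sum_i \sum_j A i j ^+ 2 <= N1 A ^+ 2.
  rewrite /N1; have h1 := sq_sum_le (index_enum 'I_p) (F := fun i => \sum_j `|A i j|). apply: (le_trans _ (h1 _)); last by move=> i; apply: sumr_ge0.
  apply: ler_sum => i _.
  rewrite (eq_bigr (fun j => `|A i j| ^+ 2)); last by move=> j _; rewrite real_normK // num_real.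
  exact: (sq_sum_le (index_enum _) (F := fun j => `|A i j|) (fun j => normr_ge0 _)).
rewrite -(ger0_norm (N1_ge0 A)) -sqrtr_sqr.
exact: ler_wsqrtr.
Qed.

Lemma entry_le_mnorm p q (A : 'M[R]_(p, q)) i j : `|A i j| <= mnorm A.
Proof.
rewrite -sqrtr_sqr; apply: ler_wsqrtr.
apply: le_trans (le_sum1 (F := fun i => \sum_j A i j ^+ 2) i _); last first.
  by move=> k; apply: sumr_ge0 => l _; apply: sqr_ge0.
exact: (le_sum1 (F := fun j => A i j ^+ 2) j (fun l => sqr_ge0 _)).
Qed.

Lemma N1_le_mnorm p q (A : 'M[R]_(p, q)) : N1 A <= (p * q)%:R * mnorm A.
Proof.
apply: le_trans (_ : \sum_(i < p) \sum_(j < q) mnorm A <= _).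
  by apply: ler_sum => i _; apply: ler_sum => j _; apply: entry_le_mnorm.
rewrite sumr_const card_ord sumr_const card_ord -mulrnA mulr_natl mulnC.
by [].
Qed.

Lemma lip_N1 p1 q1 p2 q2 (f : 'M[R]_(p1, q1) -> 'M[R]_(p2, q2)) :
  lipschitz f -> exists K, 0 <= K /\ forall x y, N1 (f x - f y) <= K * N1 (x - y).
Proof.
case=> L HL; exists ((p2 * q2)%:R * `|L|); split; first by rewrite mulr_ge0.
move=> x y; apply: le_trans (N1_le_mnorm _) _.
rewrite -mulrA ler_wpM2l //.
apply: le_trans (HL x y) _.
apply: le_trans (_ : `|L| * mnorm (x - y) <= _).
  by apply: ler_wpM2r; [apply: mnorm_ge0 | apply: ler_norm].
by apply: ler_wpM2l => //; apply: mnorm_le_N1.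
Qed.

Lemma N1_col_mx p1 p2 q (A : 'M[R]_(p1, q)) (B : 'M[R]_(p2, q)) :
  N1 (col_mx A B) = N1 A + N1 B.
Proof.
rewrite /N1 big_split_ord; congr (_ + _); apply: eq_bigr => i _;
  apply: eq_bigr => j _; by rewrite ?col_mxEu ?col_mxEd.
Qed.

Lemma col_mxB p1 p2 q (A A' : 'M[R]_(p1, q)) (B B' : 'M[R]_(p2, q)) :
  col_mx A B - col_mx A' B' = col_mx (A - A') (B - B').
Proof. by rewrite opp_col_mx add_col_mx. Qed.

Lemma colB p q (A B : 'M[R]_(p, q)) i : col i A - col i B = col i (A - B).
Proof. by apply/matrixP => k l; rewrite !mxE. Qed.

Lemma N1_col p q (A : 'M[R]_(p, q)) i : N1 (col i A) <= N1 A.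
Proof.
rewrite /N1; apply: ler_sum => k _; rewrite big_ord1 mxE.
exact: (le_sum1 (F := fun j => `|A k j|) i (fun l => normr_ge0 _)).
Qed.

Lemma N1_scal (x y : R) : N1 ((x%:M : 'M_1) - y%:M) = `|x - y|.
Proof. by rewrite /N1 !big_ord1 !mxE eqxx !mulr1n. Qed.

Lemma N1_cV p (v : 'cV[R]_p) : N1 v = \sum_k `|v k 0|.
Proof. by apply: eq_bigr => k _; rewrite big_ord1. Qed.

Lemma col_perm_col p q (s : 'S_q) (A : 'M[R]_(p, q)) i :
  col i (col_perm s A) = col (s i) A.
Proof. by apply/matrixP => k l; rewrite !mxE. Qed.

Lemma pdist_perm d n (s : 'S_n) (Y : 'M[R]_(d, n)) i j :
  pdist (col_perm s Y) i j = pdist Y (s i) (s j).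
Proof. by rewrite /pdist !col_perm_col. Qed.

End Aux.

Section Main.
Variables (R : realType) (n d : nat) (a b : nat -> nat).

Definition Sd (X Y : 'M[R]_(d, n)) : R :=
  \sum_(i < n) \sum_(j < n) `|pdist X i j - pdist Y i j|.

Lemma Sd_ge0 X Y : 0 <= Sd X Y.
Proof. by apply: sumr_ge0 => i _; apply: sumr_ge0. Qed.

Lemma agg_bound t (C C' : 'M[R]_(a t, n)) (X Y : 'M[R]_(d, n)) i :
  N1 (wl_agg X C i - wl_agg Y C' i) <= (2 * n)%:R * N1 (C - C') + Sd X Y.
Proof.
rewrite /N1 exchange_big /=.
apply: le_trans (_ : \sum_(j < n) (N1 (C - C') + N1 (C - C') + `|pdist X i j - pdist Y i j|) <= _).
  apply: ler_sum => j _.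
  have -> : \sum_(k < a t + a t + 1) `|(wl_agg X C i - wl_agg Y C' i) k j| =
     N1 (col_mx (col_mx (col i C) (col j C)) (pdist X i j)%:M -
         col_mx (col_mx (col i C') (col j C')) (pdist Y i j)%:M).
    by rewrite N1_cV; apply: eq_bigr => k _; rewrite !mxE.
  rewrite !col_mxB !colB !N1_col_mx N1_scal.
  by rewrite lerD2r lerD // N1_col.
rewrite big_split /= sumr_const card_ord.
apply: lerD.
  by rewrite -mulr2n -mulrnA mulr_natl mulnC.
exact: (le_sum1 (F := fun i => \sum_j `|pdist X i j - pdist Y i j|) i
          (fun k => sumr_ge0 _ (fun l _ => normr_ge0 _))).
Qed.


Variables (phi : forall t, 'cV[R]_(a t + b t) -> 'cV[R]_(a t.+1))
  (psi : forall t, 'M[R]_(a t + a t + 1, n) -> 'cV[R]_(b t)).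

Lemma step_bound t (Kphi Kpsi : R) (C C' : 'M[R]_(a t, n)) (X Y : 'M[R]_(d, n)) :
  0 <= Kphi -> 0 <= Kpsi ->
  (forall x y, N1 (@phi t x - @phi t y) <= Kphi * N1 (x - y)) ->
  (forall x y, N1 (@psi t x - @psi t y) <= Kpsi * N1 (x - y)) ->
  N1 (wl_step phi psi X C - wl_step phi psi Y C') <=
  n%:R * (Kphi * (N1 (C - C') + Kpsi * ((2 * n)%:R * N1 (C - C') + Sd X Y))).
Proof.
move=> Kphi0 Kpsi0 Hphi Hpsi.
set Z := Kphi * _.
rewrite (_ : n%:R * Z = \sum_(i < n) Z); last by rewrite sumr_const card_ord mulr_natl.
rewrite {1}/N1 exchange_big /=.
apply: ler_sum => i _.
have -> : \sum_(k < a t.+1) `|(wl_step phi psi X C - wl_step phi psi Y C') k i| =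
   N1 (@phi t (col_mx (col i C) (@psi t (wl_agg X C i))) -
       @phi t (col_mx (col i C') (@psi t (wl_agg Y C' i)))).
  by rewrite N1_cV; apply: eq_bigr => k _; rewrite !mxE.
apply: le_trans (Hphi _ _) _.
apply: ler_wpM2l => //.
rewrite col_mxB N1_col_mx colB.
apply: lerD; first exact: N1_col.
apply: le_trans (Hpsi _ _) _.
apply: ler_wpM2l => //.
exact: agg_bound.
Qed.

Lemma colors_bound T :
  (forall t, (t < T)%N -> lipschitz (@phi t)) ->
  (forall t, (t < T)%N -> lipschitz (@psi t)) ->
  forall t, (t <= T)%N -> exists M : R, 0 <= M /\ forall X Y : 'M[R]_(d, n),
    N1 (wl_colors phi psi X t - wl_colors phi psi Y t) <= M * Sd X Y.
Proof.
move=> Hphi Hpsi; elim=> [|t IH] Ht.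
  exists 0; split => // X Y; rewrite /= subrr mul0r /N1.
  by rewrite big1 // => i _; rewrite big1 // => j _; rewrite mxE normr0.
have tT : (t < T)%N by [].
have [M [M0 HM]] := IH (ltnW tT).
have [Kphi [Kphi0 HKphi]] := lip_N1 (Hphi t tT).
have [Kpsi [Kpsi0 HKpsi]] := lip_N1 (Hpsi t tT).
exists (n%:R * (Kphi * (M + Kpsi * ((2 * n)%:R * M + 1)))); split.
  by rewrite !(mulr_ge0, addr_ge0).
move=> X Y /=.
apply: le_trans (step_bound _ _ _ _ Kphi0 Kpsi0 HKphi HKpsi) _.
have hE := HM X Y.
have S0 := Sd_ge0 X Y.
set E := N1 _ in hE *; set S := Sd X Y in S0 hE *.
apply: le_trans (_ : n%:R * (Kphi * (M * S + Kpsi * ((2 * n)%:R * (M * S) + S))) <= _).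
  apply: ler_wpM2l => //; apply: ler_wpM2l => //; apply: lerD => //.
  apply: ler_wpM2l => //; apply: lerD => //; exact: ler_wpM2l.
by rewrite le_eqVlt; apply/orP; left; apply/eqP; ring.
Qed.

Lemma colors_perm T (s : 'S_n) (Y : 'M[R]_(d, n)) :
  (forall t, (t < T)%N -> multiset_fun (@psi t)) ->
  forall t, (t <= T)%N ->
  wl_colors phi psi (col_perm s Y) t = col_perm s (wl_colors phi psi Y t).
Proof.
move=> Hinv; elim=> [|t IH] Ht.
  by apply/matrixP => i j; rewrite !mxE.
rewrite /= IH ?(ltnW Ht) //.
apply/matrixP => k i; rewrite !mxE col_perm_col.
set C := wl_colors phi psi Y t.
have -> : wl_agg (col_perm s Y) (col_perm s C) i = col_perm s (wl_agg Y C (s i)).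
  apply/matrixP => k' j.
  rewrite [LHS]mxE [RHS]mxE [RHS]mxE !col_perm_col pdist_perm //.
by rewrite Hinv.
Qed.

End Main.

Unset Implicit Arguments.
Theorem theorem3 (R : realType) (n d T m : nat) (a b : nat -> nat)
  (phi : forall t, 'cV[R]_(a t + b t) -> 'cV[R]_(a t.+1))
  (psi : forall t, 'M[R]_(a t + a t + 1, n) -> 'cV[R]_(b t))
  (readout : 'M[R]_(a T, n) -> 'cV[R]_m) :
  (0 < n)%N -> (0 < d)%N -> (0 < T)%N ->
  (forall t, (t < T)%N -> multiset_fun (psi t)) ->
  multiset_fun readout ->
  (forall t, (t < T)%N -> lipschitz (phi t)) ->
  (forall t, (t < T)%N -> lipschitz (psi t)) ->
  lipschitz readout ->
  exists L : R, 0 < L /\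
    forall X Y : 'M[R]_(d, n),
      mnorm (wl_model phi psi readout X - wl_model phi psi readout Y)
        <= L * hgw X Y.
Proof.
move=> _ _ _ Hinv Hrinv Hphi Hpsi Hr.
have [M [M0 HM]] := @colors_bound R n d a b phi psi T Hphi Hpsi T (leqnn T).
have [Kr [Kr0 HKr]] := lip_N1 Hr.
exists (1 + Kr * M); split; first by have := mulr_ge0 Kr0 M0; lra.
move=> X Y.
have [s hs] : exists s, hgw X Y = hgw_cost X Y s.
  rewrite /hgw; apply: (big_ind (fun x => exists s, x = hgw_cost X Y s)).
  - by exists 1%g.
  - by move=> x y [s1 ->] [s2 ->]; rewrite minEle; case: ifP => _; eauto.
  - by move=> s _; exists s.
have hc : hgw_cost X Y s = Sd X (col_perm s Y).
  by rewrite /hgw_cost /Sd; apply: eq_bigr => i _; apply: eq_bigr => j _; rewrite pdist_perm.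
have hY : wl_model phi psi readout Y = wl_model phi psi readout (col_perm s Y).
  by rewrite /wl_model (@colors_perm R n d a b phi psi T s Y Hinv T (leqnn T)) // Hrinv.
rewrite hs hc hY.
apply: le_trans (mnorm_le_N1 _) _.
apply: le_trans (HKr _ _) _.
apply: le_trans (ler_wpM2l Kr0 (HM _ _)) _.
have := Sd_ge0 X (col_perm s Y); have := mulr_ge0 Kr0 M0; nra.
Qed.
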